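(* Let $X$ be a finite set. \begin{enumerate} \item Let $(p_B)_{B\subseteq X}$ be nonnegative reals summing to $1$, let $\tilde p_B=(p_B+p_{X\setminus B})/2$, and for $A\subseteq X$ let $s_A=\sum_{B\in\mathcal{S}_A}p_B$ where $\mathcal{S}_A=\{B\subseteq X: A\cap B\neq\emptyset,\ A\cap(X\setminus B)\neq\emptyset\}$. For $A\subseteq X$ define $\gamma_A=\sum_{B\subseteq X:\,|A\cap B|\text{ odd}}\tilde p_B$ if $|A|$ is even and $\gamma_A=0$ if $|A|$ is odd. Then for all $A,B\subseteq X$, \[ \gamma_A=\sum_{C\subseteq A}(-2)^{|C|-2}s_C,\qquad s_B=\frac{1}{2^{|B|-2}}\sum_{C\subseteq B}\gamma_C . \] \item Let $T$ be a phylogenetic tree with leaf set $X$ and nonnegative branch lengths. For $B\subseteq X$ let $\tilde w_B=w_{B|X\setminus B}/2$, where $w_{B|X\setminus B}$ is the length of the edge of $T$ whose deletion splits the leaves into $B$ and $X\setminus B$ if such an edge exists, and $0$ otherwise. Let $\delta_A$ be the sum of branch lengths of the smallest subtree of $T$ connecting $A$ ($\delta_A=0$ if $|A|\le 1$). For $A\subseteq X$ define $\mu_A=\sum_{B\subseteq X:\,|A\cap B|\text{ odd}}\tilde w_B$ if $|A|$ is even and $\mu_A=0$ if $|A|$ is odd. Then for all $A,B\subseteq X$, \[ \mu_A=\sum_{C\subseteq A}(-2)^{|C|-2}\delta_C,\qquad \delta_B=\frac{1}{2^{|B|-2}}\sum_{C\subseteq B}\mu_C . \] \end{enumerate}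
   Context: $p_B$ is the probability that at a bi-allelic site exactly the taxa in $B$ have state $1$; $s_A$ is the probability that a site is non-constant over $A$. A phylogenetic tree with leaf set $X$ is a tree whose leaves are bijectively labelled by $X$ and whose internal vertices have degree at least $3$. *)

(* Defs.v *)
From HB Require Import structures.
From mathcomp Require Import all_boot all_order all_algebra.
Set Implicit Arguments. Unset Strict Implicit. Unset Printing Implicit Defensive.
Import Order.TTheory GRing.Theory Num.Theory.
Local Open Scope ring_scope.

Section Part1.
Variables (X : finType) (R : realFieldType) (p : {set X} -> R).

Definition ptilde (B : {set X}) : R := (p B + p (~: B)) / 2.

Definition splitsA (A B : {set X}) : bool :=
  (A :&: B != set0) && (A :&: ~: B != set0).

Definition s_ (A : {set X}) : R := \sum_(B : {set X} | splitsA A B) p B.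

Definition gamma_ (A : {set X}) : R :=
  if odd #|A| then 0 else \sum_(B : {set X} | odd #|A :&: B|) ptilde B.
End Part1.

Section Tree.
Variables (V : finType) (e : rel V).

Definition is_tree : Prop :=
  symmetric e /\ irreflexive e /\ (forall x y, connect e x y) /\
  (forall c : seq V, (3 <= size c)%N -> ~~ (cycle e c && uniq c)).

Definition deg (v : V) : nat := #|[set u | e v u]|.
Definition is_leaf (v : V) : bool := (deg v <= 1)%N.

Definition tree_edges : {set {set V}} :=
  [set [set u; v] | u in V, v in V & e u v].

Definition del_edge (u v : V) : rel V :=
  fun x y => e x y && ([set x; y] != [set u; v]).

Variables (X : finType) (lab : X -> V) (R : realFieldType) (l : {set V} -> R).

Definition phylo_tree : Prop :=
  is_tree /\ injective lab /\ (forall v, is_leaf v = (v \in codom lab)) /\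
  (forall v, ~~ is_leaf v -> (3 <= deg v)%N).

Definition side (u v : V) : {set X} :=
  [set x | connect (del_edge u v) u (lab x)].

(* w_{B|X\B}: length of the edge inducing split B|X\B (0 if none);
   each such edge is counted once, via its orientation (u,v) with u on B's side *)
Definition wsplit (B : {set X}) : R :=
  \sum_(uv : V * V | e uv.1 uv.2 && (side uv.1 uv.2 == B)) l [set uv.1; uv.2].

Definition wtilde (B : {set X}) : R := wsplit B / 2.

Definition connects (A : {set X}) (S : {set {set V}}) : bool :=
  [forall a in A, forall b in A,
     connect (fun x y => e x y && ([set x; y] \in S)) (lab a) (lab b)].

Definition min_subtree (A : {set X}) : {set {set V}} :=
  \bigcap_(S in powerset tree_edges | connects A S) S.

Definition delta (A : {set X}) : R := \sum_(s in min_subtree A) l s.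

Definition mu (A : {set X}) : R :=
  if odd #|A| then 0 else \sum_(B : {set X} | odd #|A :&: B|) wtilde B.
End Tree.

(* Main.v *)
Require Import Defs.
From HB Require Import structures.
From mathcomp Require Import all_boot all_order all_algebra.
From mathcomp Require Import ring lra.
Import Order.TTheory GRing.Theory Num.Theory.
Local Open Scope ring_scope.

Set Implicit Arguments. Unset Strict Implicit.

Section Alg.
Variables (X : finType) (R : realFieldType).

Lemma pw (x : R) (n : nat) : x != 0 -> x ^ ((n : int) - 2) = x ^+ n / x ^+ 2.
Proof. by move=> x0; rewrite expfzDr // exprnP -exprnN. Qed.

Lemma sum_subset_prod (B : {set X}) (g : X -> R) :
  \sum_(C : {set X} | C \subset B) \prod_(i in C) g i = \prod_(i in B) (1 + g i).
Proof.
rewrite big_mkcond /=.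
have -> : \prod_(i in B) (1 + g i) =
   \prod_i ((if i \in B then g i else 0) + 1).
  by rewrite big_mkcond; apply: eq_bigr => i _; case: (i \in B); rewrite ?addr0 ?add0r // addrC.
rewrite (bigA_distr 1 +%R) /=.
apply: eq_big => // J _.
case: ifP => JB.
  rewrite big_mkcond; apply: eq_bigr => i _; case: ifP => // iJ.
  by rewrite (subsetP JB _ iJ).
have /subsetPn [i iJ iB] := negbT JB.
rewrite (bigD1 i) //= iJ (negbTE iB) mul0r //.
Qed.

Lemma prod_if (C F : {set X}) (a b : R) :
  \prod_(i in C) (if i \in F then a else b) = a ^+ #|C :&: F| * b ^+ #|C :\: F|.
Proof.
rewrite (bigID (fun i => i \in F)) /=.
rewrite -!prodr_const; congr (_ * _); apply: eq_big => i.
- by rewrite inE.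
- by case/andP => _ ->.
- by rewrite inE andbC.
- by case/andP => _ /negbTE ->.
Qed.

Definition Z (C F : {set X}) : R := if C :&: F == set0 then 1 else 0.

Lemma sumS1 (B F : {set X}) :
  \sum_(C : {set X} | C \subset B) (-1) ^+ #|C :&: F| = 2 ^+ #|B| * Z B F.
Proof.
have E : forall C : {set X}, (-1) ^+ #|C :&: F| = \prod_(i in C) (if i \in F then -1 else 1 : R).
  by move=> C; rewrite prod_if expr1n mulr1.
under eq_bigr => C _ do rewrite E.
rewrite sum_subset_prod.
rewrite (eq_bigr (fun i => if i \in F then 0 else 2)); last first.
  by move=> i _; case: (i \in F); rewrite ?addrN.
rewrite prod_if expr0n /Z.
rewrite cards_eq0; case: ifP => /eqP h; last by rewrite !mul0r mulr0.
rewrite !mul1r mulr1; congr (_ ^+ _).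
by rewrite -(cardsID F B) h cards0.
Qed.

Lemma sumS2 (A F : {set X}) :
  \sum_(C : {set X} | C \subset A) (-2) ^+ #|C| * Z C F = (-1) ^+ #|A :\: F|.
Proof.
have E : forall C : {set X}, (-2) ^+ #|C| * Z C F = \prod_(i in C) (if i \in F then 0 else -2).
  move=> C; rewrite prod_if expr0n /Z cards_eq0.
  case: ifP => /eqP h; last by rewrite mulr0 mul0r.
  by rewrite mul1r mulr1 -(cardsID F C) h cards0.
under eq_bigr => C _ do rewrite E.
rewrite sum_subset_prod.
rewrite (eq_bigr (fun i => if i \in F then 1 else -1)); last first.
  by move=> i _; case: (i \in F); rewrite ?addr0 //; ring.
by rewrite prod_if expr1n mul1r.
Qed.


Lemma split_ind (C D : {set X}) :
  (if splitsA C D then 1 else 0 : R) = Z C set0 - Z C D - Z C (~: D) + Z C setT.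
Proof.
rewrite /splitsA /Z setI0 eqxx setIT.
have H : C :&: D :|: C :&: ~: D = C by rewrite -setDE setID.
case: (eqVneq (C :&: D) set0) => h1; case: (eqVneq (C :&: ~:D) set0) => h2 /=.
- by rewrite -H h1 h2 setU0 eqxx; ring.
- have -> : (C == set0) = false.
    by apply/negbTE; apply: contra h2 => /eqP ->; rewrite set0I.
  ring.
- have -> : (C == set0) = false.
    by apply/negbTE; apply: contra h1 => /eqP ->; rewrite set0I.
  ring.
- have -> : (C == set0) = false.
    by apply/negbTE; apply: contra h1 => /eqP ->; rewrite set0I.
  ring.
Qed.

Lemma sign_case (k m : nat) :
  (if odd (k + m) then 0 else if odd k then 1 else 0 : R) =
  (1 - (-1) ^+ m - (-1) ^+ k + (-1) ^+ (k + m)) / 4.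
Proof.
rewrite exprD -(signr_odd _ k) -(signr_odd _ m) oddD.
case: (odd k); case: (odd m) => /=; field; rewrite ?pnatr_eq0 //.
Qed.

Lemma L1 (A D : {set X}) :
  (if odd #|A| then 0 else if odd #|A :&: D| then 1 else 0 : R) =
  \sum_(C : {set X} | C \subset A) (-2) ^ ((#|C| : int) - 2) * (if splitsA C D then 1 else 0).
Proof.
have n2 : (-2 : R) != 0 by rewrite oppr_eq0 pnatr_eq0.
under eq_bigr => C _ do rewrite pw // split_ind.
transitivity (((-2) ^+ 2)^-1 * (
   \sum_(C : {set X} | C \subset A) (-2) ^+ #|C| * Z C set0
 - \sum_(C : {set X} | C \subset A) (-2) ^+ #|C| * Z C D
 - \sum_(C : {set X} | C \subset A) (-2) ^+ #|C| * Z C (~: D)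
 + \sum_(C : {set X} | C \subset A) (-2) ^+ #|C| * Z C setT) : R); last first.
  rewrite -sumrB -sumrB -big_split /= big_distrr /=; apply: eq_bigr => C _; ring.
rewrite !sumS2 setD0 setDT cards0 [A :\: ~: D]setDE setCK expr0.
rewrite -(cardsID D A) sign_case; field; rewrite ?pnatr_eq0 //.
Qed.

Lemma sign_case2 (k m : nat) :
  (if odd (k + m) then 0 else if odd k then 1 else 0 : R) =
  (1 - (-1) ^+ k - (-1) ^+ m + (-1) ^+ (k + m)) / 4.
Proof.
rewrite exprD -(signr_odd _ k) -(signr_odd _ m) oddD.
case: (odd k); case: (odd m) => /=; field; rewrite ?pnatr_eq0 //.
Qed.

Lemma L2 (B D : {set X}) :
  (if splitsA B D then 1 else 0 : R) =
  (2 ^ ((#|B| : int) - 2))^-1 *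
  \sum_(C : {set X} | C \subset B) (if odd #|C| then 0 else if odd #|C :&: D| then 1 else 0).
Proof.
have n2 : (2 : R) != 0 by rewrite pnatr_eq0.
have E : forall C : {set X}, (if odd #|C| then 0 else if odd #|C :&: D| then 1 else 0 : R) =
   ((-1) ^+ #|C :&: set0| - (-1) ^+ #|C :&: D| - (-1) ^+ #|C :&: ~: D| + (-1) ^+ #|C :&: setT|) / 4.
  move=> C; rewrite setI0 cards0 setIT -(cardsID D C) setDE sign_case2 expr0; field; by rewrite ?pnatr_eq0.
under eq_bigr => C _ do rewrite E.
rewrite -big_distrl /= big_split /= !sumrB !sumS1 pw // split_ind.
have h : (2 : R) ^+ #|B| != 0 by rewrite expf_neq0.
by field.
Qed.

Lemma gen1 (I : finType) (q : I -> R) (f : I -> {set X}) (A : {set X}) :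
  (if odd #|A| then 0 else \sum_i q i * (if odd #|A :&: f i| then 1 else 0)) =
  \sum_(C : {set X} | C \subset A) (-2) ^ ((#|C| : int) - 2) *
      \sum_i q i * (if splitsA C (f i) then 1 else 0).
Proof.
transitivity (\sum_i q i * (if odd #|A| then 0 else if odd #|A :&: f i| then 1 else 0)).
  by case: (odd #|A|) => //; rewrite big1 // => i _; rewrite mulr0.
under eq_bigr => i _ do rewrite L1 big_distrr /=.
under [RHS]eq_bigr => C _ do rewrite big_distrr /=.
rewrite [RHS]exchange_big /=; apply: eq_bigr => i _; apply: eq_bigr => C _; exact: mulrCA.
Qed.

Lemma gen2 (I : finType) (q : I -> R) (f : I -> {set X}) (B : {set X}) :
  \sum_i q i * (if splitsA B (f i) then 1 else 0) =
  (2 ^ ((#|B| : int) - 2))^-1 *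
  \sum_(C : {set X} | C \subset B)
     (if odd #|C| then 0 else \sum_i q i * (if odd #|C :&: f i| then 1 else 0)).
Proof.
transitivity ((2 ^ ((#|B| : int) - 2))^-1 *
  \sum_(C : {set X} | C \subset B)
     \sum_i q i * (if odd #|C| then 0 else if odd #|C :&: f i| then 1 else 0)); last first.
  congr (_ * _); apply: eq_bigr => C _.
  by case: (odd #|C|) => //; rewrite big1 // => i _; rewrite mulr0.
under eq_bigr => i _ do rewrite L2 mulrCA.
rewrite -big_distrr /=; congr (_ * _).
under eq_bigr => i _ do rewrite big_distrr /=.
exact: exchange_big.
Qed.

End Alg.

Section Tree2.
Variables (V : finType) (e : rel V) (X : finType) (lab : X -> V).
Hypotheses (esym : symmetric e) (eirr : irreflexive e) (econn : forall x y, connect e x y).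

Lemma in_edges x y : e x y -> [set x; y] \in tree_edges e.
Proof. by move=> exy; apply/imset2P; exists x y; rewrite ?inE. Qed.

Lemma del_sym u v : symmetric (del_edge e u v).
Proof. by move=> x y; rewrite /del_edge esym setUC. Qed.

Lemma F1 u v : e u v -> forall w,
  connect (del_edge e u v) u w || connect (del_edge e u v) v w.
Proof.
move=> euv w.
pose a := [pred z | connect (del_edge e u v) u z || connect (del_edge e u v) v z].
have H : forall x y, e x y -> x \in a -> y \in a.
  move=> x y exy; rewrite !inE.
  case: (eqVneq [set x; y] [set u; v]) => h.
    have : y \in [set u; v] by rewrite -h set22.
    by rewrite !inE => /orP[] /eqP ->; rewrite connect0 ?orbT.
  have dxy : del_edge e u v x y by rewrite /del_edge exy h.
  by case/orP => c; apply/orP; [left|right]; apply: connect_trans c (connect1 dxy).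
have cl : closed e a.
  move=> x y exy; apply/idP/idP; first exact: H.
  by apply: H; rewrite esym.
have := closed_connect cl (econn u w).
by rewrite !inE connect0 /= => <-.
Qed.

Lemma conn_all u v (C : {set X}) z :
  (forall a, a \in C -> connect (del_edge e u v) z (lab a)) ->
  connects e lab C (tree_edges e :\ [set u; v]).
Proof.
move=> H; apply/forallP => a; apply/implyP => aC; apply/forallP => b; apply/implyP => bC.
have -> : connect (fun x y => e x y && ([set x; y] \in tree_edges e :\ [set u; v])) (lab a) (lab b)
       = connect (del_edge e u v) (lab a) (lab b).
  apply: eq_connect => x y; rewrite /del_edge in_setD1.
  by case exy: (e x y) => //=; rewrite in_edges // andbT.
apply: connect_trans (H b bC).
by rewrite (sym_connect_sym (del_sym u v)); apply: H.
Qed.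

Lemma F2 u v (C : {set X}) : e u v ->
  ([set u; v] \in min_subtree e lab C) = splitsA C (side e lab u v).
Proof.
move=> euv; apply/idP/idP.
  move=> Hm; apply/negPn/negP => ns.
  have [z Hz] : exists z, forall a, a \in C -> connect (del_edge e u v) z (lab a).
    move: ns; rewrite /splitsA negb_and !negbK => /orP[] /eqP h.
      exists v => a aC; have := F1 euv (lab a).
      have : a \notin C :&: side e lab u v by rewrite h inE.
      by rewrite inE aC /= inE => /negbTE ->.
    exists u => a aC.
    have : a \notin C :&: ~: side e lab u v by rewrite h inE.
    by rewrite !inE aC /= negbK.
  have := conn_all Hz.
  move/bigcapP: Hm => Hm cS.
  have := Hm (tree_edges e :\ [set u; v]).
  by rewrite powersetE subsetDl cS in_setD1 eqxx => /(_ isT).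
case/andP => /set0Pn [a] ; rewrite inE => /andP[aC aD].
case/set0Pn => b; rewrite !inE => /andP[bC bD].
apply/bigcapP => S /andP[SP cS]; apply/negPn/negP => nS.
move/forallP: cS => /(_ a) /implyP /(_ aC) /forallP /(_ b) /implyP /(_ bC) hab.
have hd : connect (del_edge e u v) (lab a) (lab b).
  apply: connect_sub hab => x y /andP[exy xyS]; apply: connect1.
  by rewrite /del_edge exy; apply: contraNneq nS => <-.
by move: aD bD; rewrite !inE => aD; rewrite (connect_trans aD hd).
Qed.

Lemma mst_sub (C : {set X}) : min_subtree e lab C \subset tree_edges e.
Proof.
apply: bigcap_inf; rewrite powersetE subxx /=.
apply/forallP => a; apply/implyP => _; apply/forallP => b; apply/implyP => _.
have -> : connect (fun x y => e x y && ([set x; y] \in tree_edges e)) (lab a) (lab b)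
       = connect e (lab a) (lab b).
  by apply: eq_connect => x y; case exy: (e x y) => //=; rewrite in_edges.
exact: econn.
Qed.

Lemma set2_eqE (u v x y : V) : u != v ->
  ([set x; y] == [set u; v]) = ((x == u) && (y == v)) || ((x == v) && (y == u)).
Proof.
move=> uv; apply/idP/idP; last first.
  by case/orP => /andP[/eqP -> /eqP ->] //; rewrite setUC.
move/eqP=> h.
have : x \in [set u; v] by rewrite -h set21.
have : y \in [set u; v] by rewrite -h set22.
have : u \in [set x; y] by rewrite h set21.
have : v \in [set x; y] by rewrite h set22.
rewrite !inE.
case: (eqVneq x u) => [->|xu]; case: (eqVneq y v) => [->|yv] //=.
- by rewrite orbF eq_sym (negbTE uv).
- by rewrite (negbTE uv).
- by move=> _ /eqP -> _ /eqP ->; rewrite !eqxx.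
Qed.

Lemma fiber (s : {set V}) (P : pred {set V}) : s \in tree_edges e -> P s ->
  #|[pred uv : V * V | (e uv.1 uv.2 && P [set uv.1; uv.2]) && ([set uv.1; uv.2] == s)]| = 2%N.
Proof.
case/imset2P => u v _; rewrite inE => /andP[_ euv] ->{s} Ps.
have uv : u != v by apply: contraTneq euv => ->; rewrite eirr.
transitivity #|[set (u, v); (v, u)]|; last by rewrite cards2 xpair_eqE (negbTE uv).
apply: eq_card; case=> x y; rewrite !inE /= set2_eqE // !xpair_eqE.
apply/idP/idP; first by case/andP.
case/orP => /andP[/eqP -> /eqP ->]; rewrite !eqxx ?orbT andbT.
  by rewrite euv Ps.
by rewrite esym euv setUC Ps.
Qed.

Variables (R : realFieldType) (l : {set V} -> R).

Definition q (uv : V * V) : R := if e uv.1 uv.2 then l [set uv.1; uv.2] / 2 else 0.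

Lemma delta_eq (C : {set X}) :
  delta e lab l C = \sum_uv q uv * (if splitsA C (side e lab uv.1 uv.2) then 1 else 0).
Proof.
transitivity (\sum_(uv | e uv.1 uv.2 && ([set uv.1; uv.2] \in min_subtree e lab C))
                 l [set uv.1; uv.2] / 2).
  rewrite (partition_big (fun uv => [set uv.1; uv.2]) (fun s => s \in min_subtree e lab C)); last first.
    by move=> uv /andP[].
  apply: eq_bigr => s sM.
  rewrite (eq_bigr (fun _ => l s / 2)); last by move=> uv /andP[_ /eqP ->].
  rewrite (eq_bigl [pred uv : V * V | (e uv.1 uv.2 && ([set uv.1; uv.2] \in min_subtree e lab C)) && ([set uv.1; uv.2] == s)]) //.
  rewrite sumr_const fiber //; last by apply: (subsetP (mst_sub C)).
  by rewrite mulr2n; field.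
rewrite big_mkcond /=; apply: eq_bigr => [[u v]] _ /=; rewrite /q /=.
by case euv: (e u v) => /=; rewrite ?mul0r // F2 //; case: splitsA; rewrite ?mulr1 ?mulr0.
Qed.

Lemma mu_eq (A : {set X}) :
  mu e lab l A = if odd #|A| then 0 else
     \sum_uv q uv * (if odd #|A :&: side e lab uv.1 uv.2| then 1 else 0).
Proof.
rewrite /mu; case: (odd #|A|) => //.
transitivity (\sum_(uv | odd #|A :&: side e lab uv.1 uv.2|) q uv); last first.
  by rewrite big_mkcond; apply: eq_bigr => uv _; case: ifP; rewrite ?mulr1 ?mulr0.
rewrite (partition_big (fun uv => side e lab uv.1 uv.2) (fun B => odd #|A :&: B|)) //.
apply: eq_bigr => B oB; rewrite /wtilde /wsplit big_distrl /=.
rewrite big_mkcond [RHS]big_mkcond; apply: eq_bigr => uv _ /=; rewrite /q.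
case: eqP => [->|] /=; last by rewrite !andbF.
by rewrite oB !andbT; case: ifP.
Qed.

End Tree2.


Section P1.
Variables (X : finType) (R : realFieldType) (p : {set X} -> R).

Lemma gamma_eq (A : {set X}) : gamma_ p A =
  if odd #|A| then 0 else \sum_B p B * (if odd #|A :&: (fun B => B) B| then 1 else 0).
Proof.
rewrite /gamma_; case oA: (odd #|A|) => //.
rewrite /ptilde.
transitivity (\sum_(B | odd #|A :&: B|) p B / 2 + \sum_(B | odd #|A :&: B|) p (~: B) / 2).
  by rewrite -big_split /=; apply: eq_bigr => B _; rewrite mulrDl.
rewrite (reindex_inj (@setC_inj X) (P := fun B => odd #|A :&: B|) (F := fun B => p (~: B) / 2)) /=.
rewrite (eq_bigl (fun B => odd #|A :&: B|) (fun B => p (~: ~: B) / 2)); last first.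
  move=> B /=; have := cardsID B A; rewrite setDE => /(congr1 odd); rewrite oddD oA.
  by case: (odd #|A :&: B|); case: (odd _).
rewrite -big_split /= big_mkcond /=; apply: eq_bigr => B _; rewrite setCK.
by case: ifP => _; rewrite ?mulr1 ?mulr0 //; field.
Qed.

Lemma s_eq (C : {set X}) : s_ p C = \sum_B p B * (if splitsA C ((fun B => B) B) then 1 else 0).
Proof.
by rewrite /s_ big_mkcond; apply: eq_bigr => B _ /=; case: ifP; rewrite ?mulr1 ?mulr0.
Qed.
End P1.

Unset Implicit Arguments.

Theorem theorem5 (X : finType) (R : realFieldType) :
  (forall p : {set X} -> R,
     (forall B, 0 <= p B) -> \sum_(B : {set X}) p B = 1 ->
     (forall A : {set X},
        gamma_ p A = \sum_(C : {set X} | C \subset A)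
                       (-2 : R) ^ ((#|C| : int) - 2) * s_ p C) /\
     (forall B : {set X},
        s_ p B = ((2 : R) ^ ((#|B| : int) - 2))^-1 *
                 \sum_(C : {set X} | C \subset B) gamma_ p C)) /\
  (forall (V : finType) (e : rel V) (lab : X -> V) (l : {set V} -> R),
     phylo_tree e lab ->
     (forall u v, e u v -> 0 <= l [set u; v]) ->
     (forall A : {set X},
        mu e lab l A = \sum_(C : {set X} | C \subset A)
                         (-2 : R) ^ ((#|C| : int) - 2) * delta e lab l C) /\
     (forall B : {set X},
        delta e lab l B = ((2 : R) ^ ((#|B| : int) - 2))^-1 *
                          \sum_(C : {set X} | C \subset B) mu e lab l C)).
Proof.
split.
- move=> p _ _; split.
  + move=> A; rewrite gamma_eq (gen1 p (fun B => B)); apply: eq_bigr => C _.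
    by rewrite s_eq.
  + move=> B; rewrite s_eq (gen2 p (fun B => B)); congr (_ * _); apply: eq_bigr => C _.
    by rewrite gamma_eq.
- move=> V e lab l [[esym [eirr [econn _]]] _] _; split.
  + move=> A; rewrite mu_eq (@gen1 _ _ _ _ (fun uv => side e lab uv.1 uv.2)).
    by apply: eq_bigr => C _; rewrite (delta_eq lab esym eirr econn).
  + move=> B; rewrite (delta_eq lab esym eirr econn) (@gen2 _ _ _ _ (fun uv => side e lab uv.1 uv.2)).
    by congr (_ * _); apply: eq_bigr => C _; rewrite mu_eq.
Qed.
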